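(* Let $X$ be a finite set with $|X|\ge 2$, $f:2^X\to\mathbb{R}_{\ge0}$ a normalized monotone submodular function possessing supermodularity of conditioning with $f(x)>0$ for all $x\in X$, and $n\le|X|$ a positive integer. Let $x_1,\dots,x_n$ be produced by the pessimistic algorithm: $S_0=\emptyset$ and for $i=1,\dots,n$, $x_i\in\arg\max_{x\in X\setminus S_{i-1}}\underline f(x\mid S_{i-1})$, $S_i=S_{i-1}\cup\{x_i\}$. Then for $i\in\{1,2\}$ (with $i\le n$), $f(x_i\mid S_{i-1})=\max_{x\in X\setminus S_{i-1}}f(x\mid S_{i-1})$, and for every $3\le i\le n$, \[ f(x_i\mid S_{i-1})\ \ge\ \big(1-\min\{(i-1)\tau_2,1\}\big)\max_{x\in X\setminus S_{i-1}} f(x\mid S_{i-1}). \] That is, the factors $\alpha_i=1$ for $i\le2$ and $\alpha_i=1/(1-\min\{(i-1)\tau_2,1\})$ for $i>2$ (with $\alpha_i=\infty$ when $(i-1)\tau_2\ge1$) satisfy $\alpha_i f(x_i\mid S_{i-1})\ge\max_{x\in X\setminus S_{i-1}}f(x\mid S_{i-1})$.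
   Context: $f(x\mid A):=f(A\cup\{x\})-f(A)$, $f(x):=f(\{x\})$, $f(x\mid y):=f(x\mid\{y\})$. Pairwise lower estimate: $\underline f(x\mid S):=f(x)-\sum_{y\in S}(f(x)-f(x\mid y))$. 2-cardinality curvature: $\tau_2:=1-\min_{x\in X,\ y\in X\setminus\{x\}} f(x\mid y)/f(x)$. Supermodularity of conditioning: for all $S\subseteq X$, $A\subseteq B\subseteq X$, $C\subseteq X\setminus B$, $f(S\mid A)-f(S\mid A\cup C)\ge f(S\mid B)-f(S\mid B\cup C)$, where $f(T\mid A):=f(A\cup T)-f(A)$. *)

(* Defs.v *)
From mathcomp Require Import all_boot all_order all_algebra.
Set Implicit Arguments. Unset Strict Implicit. Unset Printing Implicit Defensive.
Import Order.TTheory GRing.Theory Num.Theory.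
Local Open Scope ring_scope.

Section SetFun.
Variables (R : realFieldType) (X : finType) (f : {set X} -> R).

Definition marg (x : X) (A : {set X}) : R := f (x |: A) - f A.
Definition fsing (x : X) : R := f [set x].
Definition marg2 (x y : X) : R := marg x [set y].
Definition margS (T A : {set X}) : R := f (A :|: T) - f A.

Definition lowf (x : X) (S : {set X}) : R :=
  fsing x - \sum_(y in S) (fsing x - marg2 x y).

(* The iterated min uses 1 as neutral element; under the hypotheses of the
   theorem (submodularity, f(x) > 0, |X| >= 2) every ratio is <= 1 and the
   index set is nonempty, so this is exactly the minimum. *)
Definition tau2 : R :=
  1 - \big[Num.min/1]_(x : X) \big[Num.min/1]_(y : X | y != x)
        (marg2 x y / fsing x).

Definition normalized : Prop := f set0 = 0.
Definition nonneg : Prop := forall A, 0 <= f A.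
Definition monotone : Prop := forall A B : {set X}, A \subset B -> f A <= f B.
Definition submodular : Prop :=
  forall A B : {set X}, f (A :|: B) + f (A :&: B) <= f A + f B.
Definition supermod_conditioning : Prop :=
  forall S A B C : {set X}, A \subset B -> [disjoint C & B] ->
    margS S A - margS S (A :|: C) >= margS S B - margS S (B :|: C).
End SetFun.

(* S_i = {x_1, ..., x_i} for a sequence x indexed from 1 *)
Definition Sset (X : finType) (x : nat -> X) (i : nat) : {set X} :=
  [set y | [exists j : 'I_i, y == x j.+1]].

Definition pessimistic (R : realFieldType) (X : finType) (f : {set X} -> R)
    (x : nat -> X) (n : nat) : Prop :=
  forall i, (1 <= i <= n)%N ->
    x i \notin Sset x i.-1 /\
    forall y, y \notin Sset x i.-1 -> lowf f y (Sset x i.-1) <= lowf f (x i) (Sset x i.-1).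

(* Main.v *)
Require Import Defs.
From mathcomp Require Import all_boot all_order all_algebra lra.
Import Order.TTheory GRing.Theory Num.Theory.
Local Open Scope ring_scope.

Lemma card_Sset (X : finType) (x : nat -> X) k : (#|Sset x k| <= k)%N.
Proof.
have sub : Sset x k \subset [set x (val j).+1 | j in 'I_k].
  apply/subsetP => y; rewrite inE => /existsP [j /eqP ->].
  by apply/imsetP; exists j.
by rewrite (leq_trans (subset_leq_card sub)) // (leq_trans (leq_imset_card _ _)) // card_ord.
Qed.

Lemma Sset0 (X : finType) (x : nat -> X) : Sset x 0 = set0.
Proof. by apply/setP => y; rewrite !inE; apply/existsP => -[[]]. Qed.

Lemma Sset1 (X : finType) (x : nat -> X) : Sset x 1 = [set x 1%N].
Proof.
apply/setP => y; rewrite !inE; apply/existsP/idP => [[j]|/eqP ->].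
  by rewrite (ord1 j).
by exists ord0.
Qed.

Lemma bigmin_le1 (R : realFieldType) (I : finType) (P : pred I) (F : I -> R) :
  \big[Num.min/1]_(i | P i) F i <= 1.
Proof. by elim/big_rec: _ => // i y _ hy; rewrite ge_min hy orbT. Qed.

Lemma bigmin_le (R : realFieldType) (I : finType) (P : pred I) (F : I -> R) i0 :
  P i0 -> \big[Num.min/1]_(i | P i) F i <= F i0.
Proof. by move=> Pi; rewrite (bigD1 i0) //= ge_min lexx. Qed.
Lemma low_le (R : realFieldType) (X : finType) (f : {set X} -> R) (x : X) :
  normalized f -> supermod_conditioning f ->
  forall S : {set X}, x \notin S -> lowf f x S <= marg f x S.
Proof.
move=> f0 sc S.
move Hk: #|S| => k; elim: k S Hk => [|k IH] S Hk xS.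
  move/eqP: Hk; rewrite cards_eq0 => /eqP ->.
  by rewrite /lowf /marg big_set0 subr0 setU0 f0 subr0.
have : (0 < #|S|)%N by rewrite Hk.
rewrite card_gt0 => /set0Pn [z zS].
have xS' : x \notin S :\ z by rewrite in_setD1 negb_and xS orbT.
have IH' := IH (S :\ z) _ xS'.
rewrite (cardsD1 z S) zS add1n in Hk; case: Hk => /IH' {}IH'.
have H := sc [set x] set0 (S :\ z) [set z] (sub0set _).
rewrite disjoints1 setD11 in H; have {}H := H erefl.
rewrite /margS !set0U f0 subr0 in H.
have eS : S :\ z :|: [set z] = S by rewrite setUC setD1K.
rewrite eS !(setUC _ [set x]) in H.
rewrite /lowf (big_setD1 z zS) /=.
move: IH' H; rewrite /lowf /marg2 /fsing {2}/marg (setUC [set x] [set z]) /marg.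
set a := \sum_(_ in _) _.
move=> h1 h2. rewrite [[set z; x]]setUC in h2. lra.
Qed.

Theorem theorem5 (R : realFieldType) (X : finType) (f : {set X} -> R)
    (n : nat) (x : nat -> X) :
  (2 <= #|X|)%N ->
  nonneg f -> normalized f -> monotone f -> submodular f ->
  supermod_conditioning f ->
  (forall y : X, 0 < fsing f y) ->
  (0 < n)%N -> (n <= #|X|)%N ->
  pessimistic f x n ->
  (forall i, (1 <= i <= minn 2 n)%N ->
     forall y, y \notin Sset x i.-1 ->
       marg f y (Sset x i.-1) <= marg f (x i) (Sset x i.-1)) /\
  (forall i, (3 <= i <= n)%N ->
     forall y, y \notin Sset x i.-1 ->
       (1 - Num.min (i.-1%:R * tau2 f) 1) * marg f y (Sset x i.-1)
         <= marg f (x i) (Sset x i.-1)).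
Proof.
move=> cX nn f0 mono sub sc fpos n0 nX pess.
have mg0 : forall y S, 0 <= marg f y S.
  by move=> y S; rewrite subr_ge0; apply: mono; apply: subsetUr.
have mle : forall y S, marg f y S <= fsing f y.
  move=> y S; have := sub [set y] S; have := nn ([set y] :&: S).
  rewrite /marg /fsing => h1 h2; lra.
have tau0 : 0 <= tau2 f by rewrite /tau2 subr_ge0 bigmin_le1.
have ptau : forall y z, z != y -> fsing f y - marg2 f y z <= tau2 f * fsing f y.
  move=> y z zy.
  have m1 := @bigmin_le R X (fun _ => true) (fun x0 : X => \big[Num.min/1]_(y0 : X | y0 != x0) (marg2 f x0 y0 / fsing f x0)) y erefl.
  have m2 := @bigmin_le R X (fun y0 => y0 != y) (fun y0 : X => marg2 f y y0 / fsing f y) z zy.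
  set M := \big[Num.min/1]_(x0 : X) _ in m1.
  have hM : M <= marg2 f y z / fsing f y by apply: le_trans m1 m2.
  have hM' : M * fsing f y <= marg2 f y z.
    by rewrite -(divfK (lt0r_neq0 (fpos y)) (marg2 f y z)) ler_wpM2r // ltW.
  rewrite /tau2 -/M; lra.
split.
  move=> i /andP [i1 i2].
  have iN : (1 <= i <= n)%N by rewrite i1 (leq_trans i2) // geq_minr.
  have [xiS hmax] := pess i iN.
  move=> y yS; have := hmax y yS.
  have i12 : (i = 1 \/ i = 2)%N.
    by move: i1 i2; rewrite leq_min => i1 /andP [i2 _]; case: i {xiS hmax yS iN} i1 i2 => [|[|[|]]] //; auto.
  case: i12 => Ei; rewrite Ei /=; rewrite ?Sset0 ?Sset1.
    by rewrite /lowf /marg /fsing !big_set0 !subr0 !setU0 f0 !subr0.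
  by rewrite /lowf !big_set1 /marg2 => h; lra.
move=> i /andP [i3 iN] y yS.
have [xiS hmax] := pess i (andb_true_intro (conj (leq_trans (isT : (1 <= 3)%N) i3) iN)).
set S := Sset x i.-1 in yS xiS hmax *.
case: (leP (i.-1%:R * tau2 f) 1) => h.
  have hl : (1 - i.-1%:R * tau2 f) * fsing f y <= lowf f y S.
    rewrite /lowf.
    have hs : \sum_(z in S) (fsing f y - marg2 f y z) <= \sum_(z in S) (tau2 f * fsing f y).
      apply: ler_sum => z zS; apply: ptau; apply: contraNneq yS => <-; exact: zS.
    rewrite sumr_const in hs.
    have hc : (#|S|%:R : R) <= i.-1%:R by rewrite ler_nat card_Sset.
    have ht : 0 <= tau2 f * fsing f y by rewrite mulr_ge0 // ltW.
    have h3 := ler_wpM2r ht hc; rewrite -mulr_natr in hs.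
    rewrite mulrBl mul1r -mulrA; apply: lerB => //.
    by apply: le_trans hs _; rewrite mulrC.
  apply: le_trans (low_le _ _ _ _ f0 sc _ xiS).
  apply: le_trans (hmax y yS).
  apply: le_trans hl.
  by rewrite ler_wpM2l // subr_ge0.
rewrite subrr mul0r; exact: mg0.
Qed.
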